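(* Consider $N$ identical discrete-time linear systems \[ x_k(t+1) = A x_k(t) + B u_k(t),\qquad t=1,2,\dots,\quad k=1,\dots,N, \] with $x_k\in\mathbb{R}^n$, where $B$ is an $n\times n$ nonsingular matrix and all eigenvalues of $A$ lie on the unit circle in the complex plane. Let the communication graph $\mathcal{G}(t)$ be uniformly connected with bounded Laplacian $L(t)=[l_{kj}(t)]$. Then the control law \[ u_k(t) = -\epsilon_k B^{-1}A\sum_{j=1}^N l_{kj}(t)\,x_j(t),\qquad \epsilon_k\in(0,1/d_k^{in}),\quad k=1,\dots,N, \] exponentially synchronizes all the solutions to a solution of $x_0(t+1)=Ax_0(t)$.
   Context: Communication graph: a time-varying weighted digraph $\mathcal{G}(t)$ on nodes $v_1,\dots,v_N$ with weighted adjacency matrix $A_d(t)=[a_{kj}(t)]$, bounded, with $a_{kj}(t)\in\{0\}\cup[\eta,\gamma]$ for fixed $0<\eta\le\gamma$ and $a_{kk}(t)=0$. There is an edge $\{v_k,v_j\}$ at time $t$ (and $v_j$ is a neighbor of $v_k$) iff $a_{kj}(t)\ge\eta$. A path is a sequence of vertices such that each next vertex is a neighbor of the previous one. The Laplacian $L(t)$ has $l_{kk}=\sum_i a_{ki}$, $l_{kj}=-a_{kj}$ ($j\ne k$); the in-degree of node $k$ is $d_k^{in}=\sum_j a_{kj}$. A node $v_j$ is connected to $v_k$ across an interval $I$ if there is a path from $v_j$ to $v_k$ respecting edge orientations in the digraph with edge set $\bigcup_{t\in I}\mathcal{E}(t)$. $\mathcal{G}(t)$ is uniformly connected if there exist $T>0$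 and an index $k$ such that for all $t$ every node $v_j$ ($j\ne k$) is connected to $v_k$ across $[t,t+T]$. Exponential synchronization means there is a solution $x_0(\cdot)$ of $x_0(t+1)=Ax_0(t)$ with $\|x_k(t)-x_0(t)\|\to0$ exponentially fast (geometrically) for every $k$. *)

(* Defs.v *)
From HB Require Import structures.
From mathcomp Require Import all_boot all_order all_algebra.
From mathcomp Require Import reals complex.
Set Implicit Arguments. Unset Strict Implicit. Unset Printing Implicit Defensive.
Import Order.TTheory GRing.Theory Num.Theory.
Local Open Scope ring_scope.

Definition eig_on_unit_circle (R : realType) (n : nat) (A : 'M[R]_n) : Prop :=
  forall z : R[i], eigenvalue (map_mx (real_complex R) A) z -> `|z| = 1.

Definition adjacency_ok (R : realType) (N : nat) (eta gamma : R)
    (a : nat -> 'M[R]_N) : Prop :=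
  0 < eta /\ eta <= gamma /\
  forall t (k j : 'I_N),
    (a t k k = 0) /\ (a t k j = 0 \/ (eta <= a t k j /\ a t k j <= gamma)).

Definition laplacian (R : realType) (N : nat) (a : nat -> 'M[R]_N) (t : nat)
  : 'M[R]_N :=
  \matrix_(k, j) (if k == j then \sum_i a t k i else - a t k j).

Definition in_degree (R : realType) (N : nat) (a : nat -> 'M[R]_N)
    (t : nat) (k : 'I_N) : R := \sum_j a t k j.

Definition union_edge (R : realType) (N : nat) (eta : R) (a : nat -> 'M[R]_N)
    (t T : nat) : rel 'I_N :=
  fun p q => [exists s : 'I_T.+1, eta <= a (t + s)%N p q].

(* v_j is connected to v_k across [t, t+T]: there is a path v_j, ..., v_k
   in which each next vertex is a neighbour of the previous one, in the
   digraph with edge set the union of the edge sets over [t, t+T]. *)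
Definition connected_across (R : realType) (N : nat) (eta : R)
    (a : nat -> 'M[R]_N) (t T : nat) (j k : 'I_N) : bool :=
  connect (union_edge eta a t T) j k.

Definition uniformly_connected (R : realType) (N : nat) (eta : R)
    (a : nat -> 'M[R]_N) : Prop :=
  exists (T : nat) (k : 'I_N), (0 < T)%N /\
    forall (t : nat) (j : 'I_N), j != k -> connected_across eta a t T j k.

Definition vnorm (R : realType) (n : nat) (v : 'cV[R]_n) : R :=
  \big[Num.max/0]_(i < n) `|v i 0|.

Definition exp_synchronizes (R : realType) (n N : nat) (A : 'M[R]_n)
    (x : 'I_N -> nat -> 'cV[R]_n) : Prop :=
  exists x0 : nat -> 'cV[R]_n,
    (forall t, x0 t.+1 = A *m x0 t) /\
    exists (c rho : R), 0 <= rho /\ rho < 1 /\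
      forall (k : 'I_N) (t : nat), vnorm (x k t - x0 t) <= c * rho ^+ t.

(* Main.v *)
Require Import Defs.
From HB Require Import structures.
From mathcomp Require Import all_boot all_order all_algebra.
From mathcomp Require Import reals complex.
From mathcomp Require Import ring lra zify.
Import Order.TTheory GRing.Theory Num.Theory.
Local Open Scope ring_scope.

Lemma rec_bound (F : numFieldType) (u w : nat -> F) (z mu K : F) :
  `|z| = 1 -> 1 < mu -> 0 <= K -> (forall t, u t.+1 = z * u t + w t) ->
  (forall t, `|w t| <= K * mu ^+ t) ->
  forall t, `|u t| <= (`|u 0%N| + K / (mu - 1)) * mu ^+ t.
Proof.
move=> nz mu1 K0 ru wb; elim=> [|t IH]; first by rewrite expr0 mulr1 lerDl divr_ge0 // subr_ge0 ltW.
have mu0 : 0 < mu by apply: lt_trans mu1.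
have m1 : mu - 1 != 0 by rewrite subr_eq0 gt_eqF.
set c := _ + _ in IH *.
have e : c * mu ^+ t.+1 = c * mu ^+ t + K * mu ^+ t + `|u 0%N| * (mu - 1) * mu ^+ t.
  rewrite /c exprS; field; exact: m1.
rewrite e ru; apply: (le_trans (ler_normD _ _)); rewrite normrM nz mul1r.
apply: le_trans (lerD IH (wb t)) _.
rewrite lerDl; apply: mulr_ge0; last by rewrite exprn_ge0 // ltW.
by apply: mulr_ge0 => //; rewrite subr_ge0 ltW.
Qed.

Lemma le_sum_term (F : numDomainType) (I : finType) (f : I -> F) i :
  (forall j, 0 <= f j) -> f i <= \sum_j f j.
Proof. by move=> h; rewrite (bigD1 i) //= lerDl sumr_ge0. Qed.

Lemma mat_step (F : numFieldType) n m (V W : nat -> 'M[F]_(n, m)) z mu K :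
  `|z| = 1 -> 1 < mu -> 0 <= K -> (forall t, V t.+1 = z *: V t + W t) ->
  (forall t i j, `|W t i j| <= K * mu ^+ t) ->
  exists K', 0 <= K' /\ forall t i j, `|V t i j| <= K' * mu ^+ t.
Proof.
move=> nz mu1 K0 rV bW.
have mu0 : 0 < mu by apply: lt_trans mu1.
have kd : 0 <= K / (mu - 1) by rewrite divr_ge0 // subr_ge0 ltW.
exists (\sum_i \sum_j `|V 0%N i j| + K / (mu - 1)); split.
  by rewrite addr_ge0 // !sumr_ge0 // => i _; rewrite sumr_ge0.
move=> t i j.
have h := @rec_bound F (fun t => V t i j) (fun t => W t i j) z mu K nz mu1 K0.
apply: le_trans (h _ (fun t => bW t i j) t) _.
  by move=> s; rewrite rV !mxE.
apply: ler_wpM2r; first by rewrite exprn_ge0 // ltW.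
rewrite lerD2r.
apply: (le_trans (@le_sum_term F _ (fun j0 => `|V 0%N i j0|) j (fun _ => normr_ge0 _))).
exact: (@le_sum_term F _ (fun i0 => \sum_j0 `|V 0%N i0 j0|) i (fun _ => sumr_ge0 _ (fun _ _ => normr_ge0 _))).
Qed.

Lemma pow_bound_list (F : numFieldType) n (M : 'M[F]_n.+1) mu (s : seq F) :
  1 < mu -> all (fun z => `|z| == 1) s ->
  (exists K, 0 <= K /\ forall t i j,
     `|(M ^+ t * \prod_(z <- s) (M - z%:M)) i j| <= K * mu ^+ t) ->
  exists K, 0 <= K /\ forall t i j, `|(M ^+ t) i j| <= K * mu ^+ t.
Proof.
move=> mu1; elim: s => [|z s IH] /=.
  by move=> _ [K [K0 h]]; exists K; split=> // t i j; have := h t i j; rewrite big_nil mulr1.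
move=> /andP[/eqP nz alls] [K [K0 h]]; apply: IH => //.
apply: (@mat_step F n.+1 n.+1 (fun t => M ^+ t * \prod_(z0 <- s) (M - z0%:M)) (fun t => M ^+ t * \prod_(z0 <- z :: s) (M - z0%:M)) z mu K nz mu1 K0).
  move=> t; rewrite big_cons mulrA mulrBr exprSr -mulrA.
  by rewrite -scalemx1 -scalerAr mulr1 mulrBl scalerAl addrC subrK mulrA.
by move=> t i j; apply: h.
Qed.


Lemma Apow_bound (R : realType) n (A : 'M[R]_n.+1) (mu : R) :
  eig_on_unit_circle A -> 1 < mu ->
  exists K, 0 <= K /\ forall t i j, `|(A ^+ t) i j| <= K * mu ^+ t.
Proof.
move=> eig mu1.
set Ac := map_mx (real_complex R) A.
have [rs Hrs] := closed_field_poly_normal (char_poly Ac).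
rewrite (monicP (char_poly_monic Ac)) scale1r in Hrs.
have H0 : \prod_(z <- rs) (Ac - z%:M) = 0.
  have := Cayley_Hamilton Ac; rewrite Hrs rmorph_prod => <-.
  by apply: eq_bigr => z _; rewrite rmorphB /= horner_mx_X horner_mx_C.
have all1 : all (fun z => `|z| == 1) rs.
  apply/allP => z zin; apply/eqP; apply: eig.
  by rewrite eigenvalue_root_char Hrs root_prod_XsubC.
have mu1c : 1 < (mu%:C)%C by rewrite -[1]/(1%:C)%C ltcR.
have [K [K0 hK]] : exists K, 0 <= K /\ forall t i j, `|(Ac ^+ t) i j| <= K * (mu%:C%C) ^+ t.
  apply: (@pow_bound_list _ n Ac (mu%:C%C) rs mu1c all1); exists 0; split => // t i j.
  by rewrite H0 mulr0 mxE normr0 mul0r.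
have mp : forall t, Ac ^+ t = map_mx (real_complex R) (A ^+ t).
  elim=> [|t IH]; first by rewrite !expr0 map_mx1.
  by rewrite !exprS IH map_mxM.
pose KR := Num.sqrt (complex.Re K ^+ 2 + complex.Im K ^+ 2).
exists KR; split; first exact: sqrtr_ge0.
move=> t i j; have := hK t i j; rewrite mp mxE.
move=> h; have := le_trans (normc_ge_Re _) h.
by rewrite /= -(ger0_norm K0) normc_def -rmorphXn -rmorphM lecR.
Qed.


Lemma path_cross (T : finType) (e : rel T) (S : {set T}) p q :
  connect e p q -> p \notin S -> q \in S ->
  exists x y, [/\ x \notin S, y \in S & e x y].
Proof.
move=> /connectP[s pth ->]; elim: s p pth => [|y s IH] p /=.
  by move=> _ /negP pS /= qS; case: pS.
move=> /andP[epy pth] pS lS; case yS: (y \in S).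
  by exists p, y.
by apply: (IH y pth) => //; rewrite yS.
Qed.

Lemma spread (R : realType) (N T : nat) (r : 'I_N) (eta g0 : R)
  (a P : nat -> 'M[R]_N) :
  (forall t i j, 0 <= P t i j) ->
  (forall t i, g0 <= P t i i) ->
  (forall t i j, eta <= a t i j -> g0 <= P t i j) ->
  0 <= g0 ->
  (forall t j, j != r -> connected_across eta a t T j r) ->
  forall (w : nat -> 'I_N -> R) t0,
  (forall t j, w t.+1 j = \sum_i P t j i * w t i) ->
  (forall j, 0 <= w t0 j) ->
  forall j, g0 ^+ (N.-1 * T.+1) * w t0 r <= w (t0 + N.-1 * T.+1)%N j.
Proof.
move=> hP0 hPd hPe g00 hconn w t0 rec w0.
have nn : forall k i, 0 <= w (t0 + k)%N i.
  elim=> [|k IH] i; first by rewrite addn0.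
  by rewrite addnS rec sumr_ge0 // => l _; rewrite mulr_ge0.
have one : forall k i j, P (t0 + k)%N j i * w (t0 + k)%N i <= w (t0 + k).+1 j.
  move=> k i j; rewrite rec (bigD1 i) //= lerDl sumr_ge0 // => l _.
  by rewrite mulr_ge0.
have pers : forall k s j, g0 ^+ s * w (t0 + k)%N j <= w (t0 + k + s)%N j.
  move=> k; elim=> [|s IH] j; first by rewrite expr0 mul1r addn0.
  rewrite addnS exprS -mulrA -addnA; apply: le_trans (one (k + s)%N j j).
  apply: ler_pM => //; rewrite ?mulr_ge0 ?exprn_ge0 //.
  by have := IH j; rewrite addnA.
pose S m := [set j | g0 ^+ (m * T.+1) * w t0 r <= w (t0 + m * T.+1)%N j].
have sub : forall m, S m \subset S m.+1.
  move=> m; apply/subsetP => j; rewrite !inE => h.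
  have e : (t0 + m * T.+1 + T.+1 = t0 + m.+1 * T.+1)%N by nia.
  have := pers (m * T.+1)%N T.+1 j; rewrite e => h2.
  apply: le_trans h2; rewrite mulSn exprD -mulrA ler_wpM2l ?exprn_ge0 //.
have grow : forall m, S m = setT \/ (m.+1 <= #|S m|)%N.
  elim=> [|m [IH|IH]].
  - right; rewrite card_gt0; apply/set0Pn; exists r.
    by rewrite inE mul0n expr0 mul1r addn0.
  - left; apply/eqP; rewrite eqEsubset subsetT /=.
    by rewrite -IH sub.
  - case: (boolP (S m == setT)) => [/eqP SmT|nT]; first by left; apply/eqP; rewrite eqEsubset subsetT -SmT sub.
    right; have [p pS] : exists p, p \notin S m.
      apply/existsP; move: nT; apply: contraR; rewrite negb_exists => /forallP h.
      by rewrite eqEsubset subsetT /=; apply/subsetP => x _; have := h x; rewrite negbK.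
    have rS : r \in S m.
      by rewrite inE; have := pers 0%N (m * T.+1)%N r; rewrite !addn0.
    have pr : p != r by apply: contraNneq pS => ->.
    have [x [y [xS yS exy]]] := @path_cross _ _ (S m) p r (hconn (t0 + m * T.+1)%N p pr) pS rS.
    have xS' : x \in S m.+1.
      move: exy => /existsP[s hs]; rewrite inE.
      have sT : (s <= T)%N by rewrite -ltnS ltn_ord.
      have h1 := pers (m * T.+1)%N s y.
      have h2 := one (m * T.+1 + s)%N y x.
      have h3 := pers (m * T.+1 + s).+1 (T - s)%N x.
      have e1 : (t0 + m.+1 * T.+1 = t0 + (m * T.+1 + s).+1 + (T - s))%N by nia.
      rewrite e1; apply: le_trans h3.
      have e2 : g0 ^+ (m.+1 * T.+1) = g0 ^+ (T - s) * (g0 * (g0 ^+ s * g0 ^+ (m * T.+1))).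
        by rewrite -exprD -exprS -exprD; congr (_ ^+ _); nia.
      rewrite e2 -!mulrA ler_wpM2l ?exprn_ge0 // addnS addnA.
      rewrite -addnA; apply: le_trans h2.
      have wr0 : 0 <= w t0 r by have := nn 0%N r; rewrite addn0.
      apply: ler_pM => //; first by rewrite !mulr_ge0 ?exprn_ge0.
        by apply: hPe; rewrite addnA; exact: hs.
      rewrite addnA; apply: le_trans h1; rewrite ler_wpM2l ?exprn_ge0 //.
      by move: yS; rewrite inE.
    have pr2 : S m \proper S m.+1.
      apply/properP; split; first exact: sub.
      by exists x.
    by apply: leq_ltn_trans IH (proper_card pr2).
move=> j.
have : j \in S N.-1.
  case: (grow N.-1) => [->|h]; first by rewrite inE.
  have -> : S N.-1 = setT.
    apply/eqP; rewrite eqEcard subsetT cardsT card_ord.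
    have N0 : (0 < N)%N by apply: leq_ltn_trans (leq0n r) (ltn_ord r).
    by rewrite prednK in h.
  by rewrite inE.
by rewrite inE.
Qed.


Lemma bernoulli (R : realFieldType) (x : R) k :
  0 <= x -> x <= 1 -> 1 - k%:R * x <= (1 - x) ^+ k.
Proof.
move=> x0 x1; elim: k => [|k IH]; first by rewrite mul0r subr0 expr0.
rewrite exprS; apply: le_trans (ler_wpM2l _ IH); last by rewrite subr_ge0.
have h : 0 <= k%:R * (x * x) :> R by rewrite mulr_ge0 // mulr_ge0.
rewrite -natr1; nra.
Qed.

Lemma consensus (R : realType) (N T : nat) (r : 'I_N) (eta g0 : R)
  (a P : nat -> 'M[R]_N) :
  (forall t i j, 0 <= P t i j) ->
  (forall t i, \sum_j P t i j = 1) ->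
  (forall t i, g0 <= P t i i) ->
  (forall t i j, eta <= a t i j -> g0 <= P t i j) ->
  0 < g0 -> g0 <= 1 ->
  (forall t j, j != r -> connected_across eta a t T j r) ->
  exists rho : R, 0 < rho /\ rho < 1 /\
  forall z : nat -> 'I_N -> R,
    (forall t j, z t.+1 j = \sum_i P t j i * z t i) ->
    exists ys C, forall t j, `|z t j - ys| <= C * rho ^+ t.
Proof.
move=> hP0 hPs hPd hPe g0p g01 hconn.
set L := (N.-1 * T.+1)%N; set Lp := L.+1; set beta := g0 ^+ L.
have b0 : 0 < beta by rewrite exprn_gt0.
have b1 : beta <= 1 by rewrite exprn_ile1 // ltW.
have Lp0 : 0 < Lp%:R :> R by rewrite ltr0n.
set x := beta / (2 * Lp%:R).
have x0 : 0 < x by rewrite divr_gt0 // mulr_gt0.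
have x1 : x <= 1 / 2.
  rewrite /x ler_pdivrMr ?mulr_gt0 //.
  have : 1 <= Lp%:R :> R by rewrite ler1n.
  nra.
set rho := 1 - x.
have key : 1 - beta <= rho ^+ Lp.
  have bb := @bernoulli R x Lp (ltW x0) ltac:(lra).
  apply: le_trans bb.
  have -> : Lp%:R * x = beta / 2 by rewrite /x; field; rewrite lt0r_neq0.
  lra.
have rho0 : 0 < rho by rewrite /rho; lra.
exists rho; split => //; split; first by rewrite /rho; lra.
move=> z rec.
pose Mx t := \big[Num.max/z t r]_j z t j.
pose mn t := \big[Num.min/z t r]_j z t j.
have hM : forall t j, z t j <= Mx t by move=> t j; apply: le_bigmax.
have hm : forall t j, mn t <= z t j by move=> t j; apply: bigmin_le.
have Mx_le : forall t c, (forall j, z t j <= c) -> Mx t <= c.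
  by move=> t c h; apply: bigmax_le => //; apply: h.
have mn_ge : forall t c, (forall j, c <= z t j) -> c <= mn t.
  by move=> t c h; apply: le_bigmin => //; apply: h.
have recM : forall t c j, c - z t.+1 j = \sum_i P t j i * (c - z t i).
  move=> t c j; rewrite rec; symmetry; under eq_bigr do rewrite mulrBr.
  by rewrite sumrB -mulr_suml hPs mul1r.
have recm : forall t c j, z t.+1 j - c = \sum_i P t j i * (z t i - c).
  move=> t c j; rewrite rec; symmetry; under eq_bigr do rewrite mulrBr.
  by rewrite sumrB -mulr_suml hPs mul1r.
have Mstep : forall t, Mx t.+1 <= Mx t.
  move=> t; apply: Mx_le => j; rewrite -subr_ge0 recM sumr_ge0 // => i _.
  by rewrite mulr_ge0 // subr_ge0.
have mstep : forall t, mn t <= mn t.+1.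
  move=> t; apply: mn_ge => j; rewrite -subr_ge0 recm sumr_ge0 // => i _.
  by rewrite mulr_ge0 // subr_ge0.
have Mmono : forall t k, Mx (t + k)%N <= Mx t.
  move=> t; elim=> [|k IH]; first by rewrite addn0.
  by rewrite addnS; apply: le_trans IH.
have mmono : forall t k, mn t <= mn (t + k)%N.
  move=> t; elim=> [|k IH]; first by rewrite addn0.
  by rewrite addnS; apply: le_trans IH _.
pose D t := Mx t - mn t.
have D0 : forall t, 0 <= D t.
  by move=> t; rewrite subr_ge0; apply: le_trans (hm t r) (hM t r).
have Dmono : forall t k, D (t + k)%N <= D t.
  by move=> t k; rewrite /D lerB // ?Mmono ?mmono.
have contr : forall t0, D (t0 + L)%N <= (1 - beta) * D t0.
  move=> t0.
  have h1 := @spread R N T r eta g0 a P hP0 hPd hPe (ltW g0p) hconn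
    (fun t j => Mx t0 - z t j) t0 (fun t j => recM t (Mx t0) j)
    (fun j => ltac:(by rewrite subr_ge0)).
  have h2 := @spread R N T r eta g0 a P hP0 hPd hPe (ltW g0p) hconn
    (fun t j => z t j - mn t0) t0 (fun t j => recm t (mn t0) j)
    (fun j => ltac:(by rewrite subr_ge0)).
  have e1 : Mx (t0 + L)%N <= Mx t0 - beta * (Mx t0 - z t0 r).
    by apply: Mx_le => j; have := h1 j; rewrite -/L -/beta /=; lra.
  have e2 : mn t0 + beta * (z t0 r - mn t0) <= mn (t0 + L)%N.
    by apply: mn_ge => j; have := h2 j; rewrite -/L -/beta /=; lra.
  rewrite /D; nra.
have geom : forall q, D (q * Lp)%N <= (1 - beta) ^+ q * D 0%N.
  elim=> [|q IH]; first by rewrite mul0n expr0 mul1r.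
  have e : (q.+1 * Lp = (q * Lp + L) + 1)%N by rewrite /Lp; nia.
  rewrite e; apply: le_trans (Dmono _ _) _; apply: le_trans (contr _) _.
  rewrite exprS -mulrA ler_wpM2l //; lra.
pose E := (fun y => exists t, y = mn t) : classical_sets.set R.
have Ehs : classical_sets.has_sup E.
  split; first by exists (mn 0%N), 0%N.
  exists (Mx 0%N) => y [t ->].
  by apply: le_trans (hm t r) _; apply: le_trans (hM t r) _; have := Mmono 0%N t.
exists (sup E), (D 0%N / rho ^+ Lp) => t j.
have up : mn t <= sup E by apply: sup_upper_bound => //; exists t.
have lo : sup E <= Mx t.
  apply: ge_sup; first by exists (mn 0%N), 0%N.
  move=> y [s ->]; set u := maxn s t.
  apply: le_trans (_ : mn u <= _).
    by have := mmono s (u - s)%N; rewrite subnKC // leq_maxl.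
  apply: le_trans (hm u r) _; apply: le_trans (hM u r) _.
  by have := Mmono t (u - t)%N; rewrite subnKC // leq_maxr.
have hD : `|z t j - sup E| <= D t.
  by rewrite ler_norml; have := hm t j; have := hM t j; rewrite /D; lra.
apply: le_trans hD _.
set q := (t %/ Lp)%N.
have tq : t = (q * Lp + t %% Lp)%N by rewrite /q -divn_eq.
have tq2 : (t <= Lp * q + Lp)%N.
  have := ltn_pmod t (isT : (0 < Lp)%N); rewrite /q; nia.
apply: le_trans (_ : D (q * Lp)%N <= _).
  by rewrite {1}tq; apply: Dmono.
apply: le_trans (geom q) _.
have r1 : rho <= 1 by rewrite /rho; lra.
have h3 : (1 - beta) ^+ q <= rho ^+ (Lp * q).
  by rewrite exprM lerXn2r // nnegrE; lra.
have h4 : rho ^+ (Lp * q + Lp) <= rho ^+ t by apply: ler_wiXn2l => //; lra.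
have pL : 0 < rho ^+ Lp by rewrite exprn_gt0.
rewrite mulrC; apply: le_trans (ler_wpM2l (D0 0%N) h3) _.
rewrite exprD in h4.
rewrite mulrAC ler_pdivlMr //.
by rewrite -mulrA ler_wpM2l.
Qed.


Definition pw {R : pzRingType} {n} (A : 'M[R]_n) t := iter t (mulmx A) 1%:M.

Lemma pw_bound (R : realType) n (A : 'M[R]_n) (mu : R) :
  eig_on_unit_circle A -> 1 < mu ->
  exists K, 0 <= K /\ forall t i j, `|pw A t i j| <= K * mu ^+ t.
Proof.
case: n A => [|n] A eig mu1.
  by exists 0; split => // t [].
have [K [K0 h]] := @Apow_bound R n A mu eig mu1; exists K; split => // t i j.
have -> : pw A t = A ^+ t.
  elim: t {i j} => [|t IH]; first by rewrite expr0.
  by rewrite exprS /pw iterS -/(pw A t) IH.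
exact: h.
Qed.

Fixpoint traj {R : pzRingType} {N n} (P : nat -> 'M[R]_N) (y0 : 'I_N -> 'cV[R]_n) t
  : 'I_N -> 'cV[R]_n :=
  match t with
  | 0 => y0
  | t'.+1 => fun k => \sum_j P t' k j *: traj P y0 t' j
  end.

Lemma sum_delta (R : pzRingType) N n (k : 'I_N) (c : R) (v : 'I_N -> 'cV[R]_n) :
  \sum_j (((k == j)%:R * c) *: v j) = c *: v k.
Proof.
rewrite (bigD1 k) //= eqxx mul1r big1 ?addr0 // => j jk.
by rewrite eq_sym (negbTE jk) mul0r scale0r.
Qed.

Lemma min_pos (R : realType) N (r : 'I_N) (eps : 'I_N -> R) :
  (forall k, 0 < eps k) -> exists e, 0 < e /\ forall k, e <= eps k.
Proof.
move=> h; case: (@arg_minP _ R _ r predT eps isT) => i _ hi.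
by exists (eps i); split => // k; apply: hi.
Qed.

Theorem lemma2 (R : realType) (n N : nat) (A B : 'M[R]_n)
    (eta gamma : R) (a : nat -> 'M[R]_N) (eps : 'I_N -> R)
    (x : 'I_N -> nat -> 'cV[R]_n) :
  B \in unitmx ->
  eig_on_unit_circle A ->
  adjacency_ok eta gamma a ->
  uniformly_connected eta a ->
  (forall k, 0 < eps k) ->
  (exists theta : R, theta < 1 /\
     forall k t, eps k * in_degree a t k <= theta) ->
  (forall k t, x k t.+1 =
     A *m x k t + B *m (- eps k *: (invmx B *m A *m
        (\sum_j laplacian a t k j *: x j t)))) ->
  exp_synchronizes A x.
Proof.
move=> Bu eig [eta0 [etag hadj]] [T [r [T0 hconn]]] epsp [theta [th1 hth]] hx.
have a0 : forall t k j, 0 <= a t k j.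
  move=> t k j; case: (hadj t k j) => _ [->|[h _]] //; exact: le_trans (ltW eta0) h.
have [emin [emin0 hemin]] := @min_pos R N r eps epsp.
pose g0 := Num.min (1 - theta) (Num.min (emin * eta) 1).
have g0p : 0 < g0.
  have ee : 0 < emin * eta by rewrite mulr_gt0.
  by rewrite !lt_min subr_gt0 th1 ltr01 ee.
have g01 : g0 <= 1 by rewrite /g0 !ge_min lexx !orbT.
pose c t k := 1 - eps k * in_degree a t k.
have c0 : forall t k, g0 <= c t k.
  by move=> t k; rewrite /g0 ge_min lerD2l lerN2 hth.
pose P t k j := (k == j)%:R * c t k + eps k * a t k j.
have hP0 : forall t i j, 0 <= P t i j.
  move=> t i j; apply: addr_ge0; apply: mulr_ge0 => //.
    exact: le_trans (ltW g0p) (c0 t i).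
  exact: ltW.
have hPs : forall t i, \sum_j P t i j = 1.
  move=> t i; rewrite big_split /= -mulr_sumr -/(in_degree a t i).
  rewrite (bigD1 i) //= eqxx mul1r big1 ?addr0 /c; first by rewrite subrK.
  by move=> j ji; rewrite eq_sym (negbTE ji) mul0r.
have hPd : forall t i, g0 <= P t i i.
  by move=> t i; rewrite /P eqxx mul1r (proj1 (hadj t i i)) mulr0 addr0.
have hPe : forall t i j, eta <= a t i j -> g0 <= P t i j.
  move=> t i j h; apply: le_trans (_ : eps i * a t i j <= _).
    apply: le_trans (_ : emin * eta <= _); first by rewrite /g0 !ge_min lexx /= !orbT.
    by apply: ler_pM => //; apply: ltW.
  rewrite /P lerDr mulr_ge0 //; exact: le_trans (ltW g0p) (c0 t i).
have [rho [rho0 [rho1 cons]]] :=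
  @consensus R N T r eta g0 a (fun t => \matrix_(k, j) P t k j)
    (fun t i j => ltac:(by rewrite mxE))
    (fun t i => ltac:(by under eq_bigr do rewrite mxE))
    (fun t i => ltac:(by rewrite mxE))
    (fun t i j h => ltac:(by rewrite mxE; apply: hPe))
    g0p g01 hconn.
have lapE : forall t k j, laplacian a t k j = (k == j)%:R * in_degree a t k - a t k j.
  move=> t k j; rewrite mxE; case: eqP => [<-|_].
    by rewrite mul1r (proj1 (hadj t k k)) subr0.
  by rewrite mul0r sub0r.
have step : forall k t, x k t.+1 = A *m \sum_j P t k j *: x j t.
  move=> k t; rewrite hx -scalemxAr !mulmxA mulmxV // mul1mx.
  rewrite scalemxAr -mulmxDr; congr (_ *m _).
  under eq_bigr do rewrite lapE scalerBl.
  rewrite sumrB sum_delta.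
  under [RHS]eq_bigr do rewrite scalerDl.
  have e2 : \sum_i (eps k * a t k i) *: x i t = eps k *: \sum_i a t k i *: x i t.
    by rewrite scaler_sumr; apply: eq_bigr => i _; rewrite scalerA.
  rewrite big_split /= sum_delta e2 /c.
  rewrite scalerBr scalerA scalerBl scale1r scaleNr. by rewrite mulNr scaleNr opprK addrA.
pose Pm t : 'M[R]_N := \matrix_(k, j) P t k j.
pose y := traj Pm (fun k => x k 0%N).
have xy : forall t k, x k t = pw A t *m y t k.
  elim=> [|t IH] k; first by rewrite /pw /= mul1mx.
  rewrite step /pw iterS -/(pw A t) -mulmxA; congr (_ *m _).
  rewrite /= mulmx_sumr; apply: eq_bigr => j _.
  by rewrite IH scalemxAr mxE.
have coord : forall cc : 'I_n, exists p : R * R,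
    forall t k, `|y t k cc 0 - p.1| <= p.2 * rho ^+ t.
  move=> cc; have hr : forall t j, y t.+1 j cc 0 = \sum_i Pm t j i * y t i cc 0.
    by move=> t j; rewrite /= summxE; apply: eq_bigr => i _; rewrite !mxE.
  have [ys [C h]] := cons (fun t k => y t k cc 0) hr.
  by exists (ys, C).
have [f hf] := fin_all_exists coord.
pose mu := 2 / (1 + rho).
have mu1 : 1 < mu by rewrite /mu ltr_pdivlMr; lra.
have mur : mu * rho < 1 by rewrite /mu mulrAC ltr_pdivrMr; lra.
have mu0 : 0 < mu by lra.
have [K [K0 hK]] := @pw_bound R n A mu eig mu1.
pose ystar : 'cV[R]_n := \col_cc (f cc).1.
pose Cs := \sum_cc `|(f cc).2|.
have Cs0 : 0 <= Cs by apply: sumr_ge0 => *; exact: normr_ge0.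
exists (fun t => pw A t *m ystar); split.
  by move=> t; rewrite /pw iterS mulmxA.
exists (n%:R * K * Cs), (mu * rho); split; first by rewrite mulr_ge0 // ltW.
split=> // k t; rewrite xy -mulmxBr.
set v := y t k - ystar.
have hv : forall j, `|v j 0| <= Cs * rho ^+ t.
  move=> j; rewrite !mxE; apply: le_trans (hf j t k) _.
  have rt : 0 <= rho ^+ t by rewrite exprn_ge0 // ltW.
  rewrite ler_wpM2r //.
  apply: le_trans (ler_norm _) _.
  exact: (@le_sum_term R _ (fun cc => `|(f cc).2|) j (fun _ => normr_ge0 _)).
rewrite /vnorm; apply: bigmax_le => [|i _].
  by rewrite !mulr_ge0 ?exprn_ge0 // mulr_ge0 // ltW.
rewrite mxE; apply: le_trans (ler_norm_sum _ _ _) _.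
apply: le_trans (_ : \sum_(j < n) (K * mu ^+ t) * (Cs * rho ^+ t) <= _).
  apply: ler_sum => j _; rewrite normrM; apply: ler_pM => //; exact: hK.
rewrite sumr_const card_ord [(mu * rho) ^+ t]exprMn -[_ *+ n]mulr_natl le_eqVlt; apply/orP; left; apply/eqP; ring.
Qed.
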